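(* For every $n \geq 1$, $c(\Gamma_n) \geq \left\lfloor \frac{n+5}{6} \right\rfloor$ and $c(\Lambda_n) \geq \left\lfloor \frac{n+5}{6} \right\rfloor$.
   Context: The Fibonacci cube $\Gamma_n$ is the subgraph of the hypercube $Q_n$ (vertex set $\{0,1\}^n$, adjacency = differing in exactly one position) induced by all binary strings of length $n$ containing no two consecutive 1's. The Lucas cube $\Lambda_n$ is the subgraph of $Q_n$ induced by all binary strings $x_1\cdots x_n$ with no two consecutive 1's and not having both $x_1 = 1$ and $x_n = 1$. Cops and Robbers: $k$ cops choose starting vertices, then the robber does; in each round all cops move (to a neighbor or stay), then the robber moves (to a neighbor or stays); cops win if some cop occupies the robber's vertex. The cop number $c(G)$ is the minimum $k$ for which the cops can guarantee capture. *)

(* Defs.v *)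
From mathcomp Require Import all_boot.
Set Implicit Arguments. Unset Strict Implicit. Unset Printing Implicit Defensive.

(* Binary strings x_1 ... x_n are n-tuples of booleans; position i (0-based)
   is [nth false x i]. *)

Definition qadj (n : nat) (x y : n.-tuple bool) : bool :=
  #|[pred i : 'I_n | tnth x i != tnth y i]| == 1.

Definition fibb (n : nat) (x : n.-tuple bool) : bool :=
  [forall i : 'I_n, (i.+1 < n) ==> ~~ (nth false x i && nth false x i.+1)].

Definition lucb (n : nat) (x : n.-tuple bool) : bool :=
  fibb x && ~~ (nth false x 0 && nth false x n.-1).

Definition FibV (n : nat) : finType := {x : n.-tuple bool | fibb x}.
Definition LucV (n : nat) : finType := {x : n.-tuple bool | lucb x}.

Definition fib_adj (n : nat) : rel (FibV n) := fun x y => qadj (val x) (val y).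
Definition luc_adj (n : nat) : rel (LucV n) := fun x y => qadj (val x) (val y).

Definition cops_move (V : finType) (e : rel V) (k : nat)
  (c c' : {ffun 'I_k -> V}) : Prop :=
  forall i, c' i = c i \/ e (c i) (c' i).

Definition caught (V : finType) (k : nat) (c : {ffun 'I_k -> V}) (r : V) : Prop :=
  exists i, c i = r.

(* [cops_force e c r]: in the position where the cops are at [c], the robber
   at [r] (not yet caught) and it is the cops' turn, the cops can guarantee
   capture in finitely many rounds (least fixpoint = attractor of the
   reachability game). *)
Inductive cops_force (V : finType) (e : rel V) (k : nat) :
    {ffun 'I_k -> V} -> V -> Prop :=
| cf_step c r c' :
    cops_move e c c' ->
    (caught c' r \/
     forall r', (r' = r \/ e r r') -> caught c' r' \/ cops_force e c' r') ->
    cops_force e c r.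

Definition cops_win (V : finType) (e : rel V) (k : nat) : Prop :=
  exists c0 : {ffun 'I_k -> V},
    forall r0 : V, caught c0 r0 \/ cops_force e c0 r0.

Definition cop_number_ge (V : finType) (e : rel V) (m : nat) : Prop :=
  forall k, cops_win e k -> m <= k.

(* Main.v *)
Require Import Defs.
From mathcomp Require Import all_boot zify.
Set Implicit Arguments. Unset Strict Implicit. Unset Printing Implicit Defensive.

Lemma cover_seq (T : finType) (Hs : seq {set T}) :
  #|foldr (@setU T) set0 Hs| <= sumn (map (fun H : {set T} => #|H|) Hs).
Proof.
elim: Hs => [|H Hs IH] /=; first by rewrite cards0.
rewrite cardsU; lia.
Qed.

Lemma union_bound (T : finType) k b (H : 'I_k -> {set T}) :
  (forall i, #|H i| <= b) -> b * k < #|T| -> exists j, forall i, j \notin H i.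
Proof.
move=> Hb Hk.
set U := foldr (@setU T) set0 [seq H i | i <- enum 'I_k].
have cU : #|U| <= b * k.
  apply: leq_trans (cover_seq _) _.
  have : forall s : seq 'I_k, sumn (map (fun H0 : {set T} => #|H0|) [seq H i | i <- s]) <= b * size s.
    elim=> [|a s IH] //=; rewrite mulnS; apply: leq_add => //; exact: Hb.
  by move/(_ (enum 'I_k)); rewrite size_enum_ord.
have : ~~ ([set: T] \subset U).
  apply/negP; rewrite subTset => /eqP E; move: cU; rewrite E cardsT; lia.
case/subsetPn => j _ jU; exists j => i; apply: contra jU => ji.
rewrite /U; have : i \in enum 'I_k by rewrite mem_enum.
elim: (enum 'I_k) => [|a s IH] //=; rewrite inE in_setU => /orP[/eqP<-|/IH->];
  by rewrite ?ji ?orbT.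
Qed.

Definition safe (V : finType) (e : rel V) k (c : {ffun 'I_k -> V}) (u : V) :=
  forall i, c i <> u /\ ~~ e (c i) u.

Lemma noforce (V : finType) (e : rel V) k (R : pred V)
  (step : forall (c : {ffun 'I_k -> V}) v, R v -> (forall i, c i <> v) ->
      exists u, [/\ R u, u = v \/ e v u & safe e c u]) :
  forall (c : {ffun 'I_k -> V}) r, cops_force e c r -> R r -> safe e c r -> False.
Proof.
fix IH 3.
move=> c r [c1 r1 c' mv alt] Rr sf.
have nc : forall i, c' i <> r1.
  move=> i Ei; case: (sf i) => n1 n2; case: (mv i) => h.
    by apply: n1; rewrite -h.
  by move: n2; rewrite -Ei h.
case: alt => [[i /nc] //|alt].
have [u [Ru mvu su]] := step c' r1 Rr nc.
case: (alt u mvu) => [[i ci]|cf].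
  by case: (su i).
exact: (IH _ _ cf Ru su).
Qed.

Lemma nowin (V : finType) (e : rel V) k (R : pred V)
  (step : forall (c : {ffun 'I_k -> V}) v, R v -> (forall i, c i <> v) ->
      exists u, [/\ R u, u = v \/ e v u & safe e c u])
  (init : forall c : {ffun 'I_k -> V}, exists u, R u /\ safe e c u) :
  ~ cops_win e k.
Proof.
case=> c0 H; have [u [Ru su]] := init c0.
case: (H u) => [[i ci]|cf]; first by case: (su i).
exact: (noforce step cf Ru su).
Qed.

Section Tup.
Variable n : nat.
Local Notation tup := (n.-tuple bool).

Definition hd (w x : tup) := #|[pred i : 'I_n | tnth w i != tnth x i]|.

Definition flip (x : tup) (p : 'I_n) : tup :=
  [tuple (if i == p then ~~ tnth x i else tnth x i) | i < n].

Lemma hd_qadj w x : qadj w x = (hd w x == 1).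
Proof. by []. Qed.

Lemma hd0 w x : (hd w x == 0) = (w == x).
Proof.
apply/idP/eqP => [/eqP H|->]; last by apply/eqP/eq_card0 => i; rewrite !inE eqxx.
apply: eq_from_tnth => i; have := card0_eq H i; rewrite !inE /=.
by move/negbFE/eqP.
Qed.

Lemma hd_flip w v p :
  hd w (flip v p) = if tnth w p != tnth v p then (hd w v).-1 else (hd w v).+1.
Proof.
set D := [set i | tnth w i != tnth v i].
have hD : hd w v = #|D| by rewrite /hd cardsE.
have E : [pred i | tnth w i != tnth (flip v p) i] =i
    (if tnth w p != tnth v p then D :\ p else p |: D).
  move=> i; rewrite !inE /flip tnth_mktuple.
  case: (boolP (tnth w p != tnth v p)) => Hp; rewrite ?inE;
  case: (i =P p) => [->|_] /=;
  by [|move: Hp; case: (tnth w p); case: (tnth v p)].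
rewrite [hd w (flip v p)](eq_card E) hD; case: ifP => Hp.
  by rewrite (cardsD1 p D) inE Hp.
by rewrite cardsU1 inE Hp.
Qed.

Lemma hd_self v : hd v v = 0.
Proof. by apply/eqP; rewrite hd0. Qed.

End Tup.

Section Rob.
Variable n : nat.
Local Notation tup := (n.-tuple bool).
Local Notation m := (n %/ 3).

Lemma pos_lt (j : 'I_m) : 3 * j + 1 < n.
Proof. have := ltn_ord j; lia. Qed.

Definition pos (j : 'I_m) : 'I_n := Ordinal (pos_lt j).

Lemma pos_inj : injective pos.
Proof. move=> a b /(congr1 val) /= E; apply: val_inj => /=; lia. Qed.

Definition cand (v : tup) (j : option 'I_m) : tup :=
  if j is Some a then flip v (pos a) else v.

Lemma tnth_flip (v : tup) (p i : 'I_n) : tnth (flip v p) i = if i == p then ~~ tnth v i else tnth v i.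
Proof. by rewrite /flip tnth_mktuple. Qed.

Lemma cand_inj (v : tup) : injective (cand v).
Proof.
have key : forall a j, cand v (Some a) = cand v j -> j = Some a.
  move=> a [b|] /= /(congr1 (fun x => tnth x (pos a))); rewrite !tnth_flip eqxx.
    case: (a =P b) => [->//|ne]; rewrite (inj_eq pos_inj).
    by move/eqP: ne => ne; rewrite (negbTE ne); case: (tnth v _).
  by case: (tnth v _).
move=> [a|] [b|] E.
- by apply/esym/key.
- by have := key _ _ E.
- by have := key _ _ (esym E).
- by [].
Qed.

Lemma hits (v w : tup) : w != v -> #|[set j | hd w (cand v j) <= 1]| <= 2.
Proof.
move=> wv.
set d := hd w v.
have d1 : 0 < d by rewrite lt0n /d hd0.
set S := [set j : 'I_m | tnth w (pos j) != tnth v (pos j)].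
have cS : #|S| <= d.
  rewrite -(card_imset S pos_inj).
  apply: leq_trans (subset_leq_card (_ : pos @: S \subset [set i | tnth w i != tnth v i])) _.
    apply/subsetP => i; case/imsetP => j; rewrite !inE => Hj ->; exact: Hj.
  by rewrite cardsE.
have memS : forall a, (Some a \in Some @: S) = (a \in S).
  by move=> a; rewrite mem_imset //; move=> x y [].
set H := [set j | _].
have sub : H \subset (if d == 1 then [set None] else set0) :|:
                     (if d <= 2 then Some @: S else set0).
  apply/subsetP => -[a|]; rewrite /H in_set /= ?hd_flip -/d in_setU.
    case: ifP => Ha Hle; last by lia.
    have -> : d <= 2 by lia.
    by rewrite memS inE Ha orbT.
  move=> Hd; have -> : d == 1 by rewrite eqn_leq Hd d1.
  by rewrite in_set1 eqxx.
apply: leq_trans (subset_leq_card sub) _.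
rewrite cardsU; have := card_imset S (@Some_inj _).
case: (d =P 1) => [E|ne]; case: ifP => H2 E2; rewrite ?cards1 ?cards0 ?E2; lia.
Qed.
End Rob.

Section Main.
Variable n : nat.
Local Notation tup := (n.-tuple bool).
Local Notation m := (n %/ 3).

Definition robber (x : tup) :=
  [forall i : 'I_n, tnth x i ==> ((i %% 3 == 1) && (i.+2 <= n))].

Lemma robber_cand (v : tup) j : robber v -> robber (cand v j).
Proof.
case: j => [a|] //= /forallP Hv; apply/forallP => i; rewrite tnth_flip.
case: (i =P pos a) => [->|_]; last exact: Hv.
apply/implyP => _; rewrite /=; have := ltn_ord a => ha; apply/andP; split.
  apply/eqP; lia.
lia.
Qed.

Lemma robber_nth (x : tup) i : robber x -> nth false x i -> (i %% 3 == 1) && (i.+2 <= n).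
Proof.
move/forallP => Hx; case: (ltnP i n) => hi.
  by rewrite -(tnth_nth false x (Ordinal hi)); move/implyP: (Hx (Ordinal hi)).
by rewrite nth_default ?size_tuple.
Qed.

Lemma robber_fib (x : tup) : robber x -> fibb x.
Proof.
move=> Rx; apply/forallP => i; apply/implyP => _; apply/negP => /andP [h1 h2].
have := robber_nth Rx h1; have := robber_nth Rx h2; lia.
Qed.

Lemma robber_luc (x : tup) : robber x -> lucb x.
Proof.
move=> Rx; rewrite /lucb robber_fib //=; apply/negP => /andP [h1 _].
by have := robber_nth Rx h1.
Qed.

Lemma robber0 : robber [tuple false | _ < n].
Proof. by apply/forallP => i; rewrite tnth_mktuple. Qed.

Lemma tstep k (f : 'I_k -> tup) v : 2 * k < m.+1 -> (forall i, f i != v) ->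
  exists j, forall i, 1 < hd (f i) (cand v j).
Proof.
move=> hk hf.
have hk' : 2 * k < #|{: option 'I_m}| by rewrite card_option card_ord.
have [j Hj] := @union_bound _ k 2 (fun i => [set j | hd (f i) (cand v j) <= 1])
  (fun i => hits (hf i)) hk'.
by exists j => i; move: (Hj i); rewrite inE -ltnNge.
Qed.

Lemma tinit k (f : 'I_k -> tup) : 2 * k < m.+1 ->
  exists j, forall i, f i != cand [tuple false | _ < n] j.
Proof.
move=> hk.
have cH : forall i, #|[set j | f i == cand [tuple false | _ < n] j]| <= 1.
  move=> i; rewrite -(card_imset _ (@cand_inj n [tuple false | _ < n])).
  apply: leq_trans (_ : #|[set f i]| <= 1); last by rewrite cards1.
  apply: subset_leq_card; apply/subsetP => y; case/imsetP => j.
  by rewrite !inE => /eqP -> ->.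
have hk' : 1 * k < #|{: option 'I_m}| by rewrite card_option card_ord; lia.
have [j Hj] := @union_bound _ k 1 _ cH hk'.
by exists j => i; move: (Hj i); rewrite inE.
Qed.

Lemma nowin_gen (P : pred tup) k (HP : forall x, robber x -> P x) :
  2 * k < m.+1 -> ~ cops_win (fun x y : {x : tup | P x} => qadj (val x) (val y)) k.
Proof.
move=> hk.
pose V := {x : tup | P x}.
pose e := (fun x y : V => qadj (val x) (val y)).
have safe_of : forall (c : {ffun 'I_k -> V}) (u : V),
    (forall i, 1 < hd (val (c i)) (val u)) -> safe e c u.
  move=> c u H i; split.
    by move=> E; move: (H i); rewrite E hd_self.
  by rewrite /e hd_qadj; move: (H i); case: (hd _ _) => [|[|]].
have mk : forall (v : V) j, robber (val v) ->
    exists u : V, val u = cand (val v) j /\ robber (val u).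
  move=> v j Rv; exists (exist (fun x => P x) (cand (val v) j) (HP _ (robber_cand j Rv))).
  by split => //; apply: robber_cand.
apply: (@nowin V e k (fun x => robber (val x))).
  move=> c v Rv nocc.
  have hf : forall i, val (c i) != val v.
    by move=> i; apply/eqP => /val_inj; apply: nocc.
  have [j Hj] := tstep hk hf.
  have [u [Eu Ru]] := mk v j Rv.
  exists u; split => //; last by apply: safe_of => i; rewrite Eu.
  case: j Hj Eu => [a|] Hj Eu; last by left; apply: val_inj.
  right; rewrite /e hd_qadj Eu /= hd_flip eqxx /= hd_self.
  by [].
move=> c.
have [j0 Hj0] := tinit (fun i => val (c i)) hk.
have [v Ev] : exists v : V, val v = cand [tuple false | _ < n] j0.
  by exists (exist (fun x => P x) _ (HP _ (robber_cand j0 robber0))).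
have Rv : robber (val v) by rewrite Ev; apply: robber_cand; apply: robber0.
have hf : forall i, val (c i) != val v by move=> i; rewrite Ev.
have [j Hj] := tstep hk hf.
have [u [Eu Ru]] := mk v j Rv.
by exists u; split => //; apply: safe_of => i; rewrite Eu.
Qed.
End Main.

Unset Implicit Arguments.

Theorem corollary3p3 (n : nat) : 1 <= n ->
  cop_number_ge (@fib_adj n) ((n + 5) %/ 6) /\
  cop_number_ge (@luc_adj n) ((n + 5) %/ 6).
Proof.
move=> _; split => k W; rewrite leqNgt; apply/negP => hk.
  by apply: (@nowin_gen n (@fibb n) k (@robber_fib n)) W; lia.
by apply: (@nowin_gen n (@lucb n) k (@robber_luc n)) W; lia.
Qed.
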